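(* For $\lambda>1$ let $\mu:=\sqrt{1-\lambda^{-2}}$ and define on $(-1,\mu^{-1}-1)$ $$\gamma_\lambda(\varepsilon):=\frac{(1+\mu(1+\varepsilon))^{1+\mu(1+\varepsilon)}}{(1-\mu(1+\varepsilon))^{1-\mu(1+\varepsilon)}}\cdot\frac{(1-\mu)^{1-\mu}}{(1+\mu)^{1+\mu}}\left(\frac{\lambda}{e}\right)^{2\mu\varepsilon}.$$ Let $\lambda_0>1$. Then there are constants $c_0,c_1,c_2>0$ depending only on $\lambda_0$ such that for every $\lambda\ge\lambda_0$: (i) for every $\varepsilon$ with $|\varepsilon|\lambda^2\le c_0$ one has $1-c_1\lambda^2\varepsilon^2\le\gamma_\lambda(\varepsilon)\le1-c_2\lambda^2\varepsilon^2$; (ii) $\gamma_\lambda$ is monotone increasing on $(-1,0)$ and monotone decreasing on $(0,\mu^{-1}-1)$; (iii) $0<\gamma_\lambda(\varepsilon)\le1-\frac{c_2}{c_0}\lambda^{-2}$ for all $\varepsilon\in(-1,\mu^{-1}-1)\setminus(-c_0\lambda^{-2},c_0\lambda^{-2})$. *)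

(* Defs.v *)
From Stdlib Require Import Reals.
Open Scope R_scope.

Definition mu (lam : R) : R := sqrt (1 - / (lam ^ 2)).

(* gamma_lambda(eps), with x^x written via Rpower (bases are positive on the domain) *)
Definition gamma (lam eps : R) : R :=
  let m := mu lam in
  let a := m * (1 + eps) in
  Rpower (1 + a) (1 + a) / Rpower (1 - a) (1 - a)
  * (Rpower (1 - m) (1 - m) / Rpower (1 + m) (1 + m))
  * Rpower (lam / exp 1) (2 * m * eps).

Definition in_dom (lam eps : R) : Prop := -1 < eps < / mu lam - 1.

(* Main.v *)
Require Import Defs.
From Stdlib Require Import Reals Lra Psatz.
From Coquelicot Require Import Coquelicot.
Open Scope R_scope.

Definition Fd (m L e : R) : R :=
  (1 + m*(1+e)) * ln (1 + m*(1+e)) - (1 - m*(1+e)) * ln (1 - m*(1+e))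
  - ((1+m)*ln(1+m) - (1-m)*ln(1-m)) + 2*m*e*(L-1).
Definition dF (m L e : R) : R :=
  m * (ln (1 + m*(1+e)) + ln (1 - m*(1+e)) + 2*L).

Lemma gamma_exp lam e : 0 < lam -> gamma lam e = exp (Fd (mu lam) (ln lam) e).
Proof.
  intros H. unfold gamma, Fd, Rpower.
  rewrite ln_div; [|lra|apply exp_pos]. rewrite ln_exp.
  unfold Rdiv. rewrite <- !exp_Ropp, <- !exp_plus. f_equal. ring.
Qed.

Lemma Fd_deriv m L e : -1 < m*(1+e) < 1 ->
  derivable_pt_lim (Fd m L) e (dF m L e).
Proof.
  intros H. apply is_derive_Reals. unfold Fd, dF.
  auto_derive.
  - repeat split; lra.
  - replace (1 + - (m*(1+e))) with (1 - m*(1+e)) by ring. field. lra.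
Qed.

Lemma h_deriv m L C e : -1 < m*(1+e) < 1 ->
  derivable_pt_lim (fun s => Fd m L s + C * s^2) e (dF m L e + 2*C*e).
Proof.
  intros H. apply is_derive_Reals. unfold Fd, dF.
  auto_derive.
  - repeat split; lra.
  - replace (1 + - (m*(1+e))) with (1 - m*(1+e)) by ring. field. lra.
Qed.

Lemma mvt_le f f' x y : x <= y ->
  (forall c, x <= c <= y -> derivable_pt_lim f c (f' c)) ->
  (forall c, x < c < y -> 0 <= f' c) -> f x <= f y.
Proof.
  intros Hxy Hd Hp. destruct (Req_dec x y) as [->|Hne]; [lra|].
  destruct (MVT_cor2 f f' x y) as [c [Hc1 Hc2]]; [lra|auto|].
  specialize (Hp c Hc2). nra.
Qed.

Lemma mvt_lt f f' x y : x < y ->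
  (forall c, x <= c <= y -> derivable_pt_lim f c (f' c)) ->
  (forall c, x < c < y -> 0 < f' c) -> f x < f y.
Proof.
  intros Hxy Hd Hp.
  destruct (MVT_cor2 f f' x y) as [c [Hc1 Hc2]]; [lra|auto|].
  specialize (Hp c Hc2). nra.
Qed.

Lemma ln_upper y : 0 < y -> ln y <= y - 1.
Proof. intros H. pose proof (exp_ineq1_le (ln y)). rewrite exp_ln in H0; lra. Qed.

Lemma ln_lower y : 0 < y -> 1 - / y <= ln y.
Proof.
  intros H. pose proof (ln_upper (/ y) (Rinv_0_lt_compat _ H)).
  rewrite ln_Rinv in H0; lra.
Qed.

Lemma exp_upper x : -1 <= x <= 0 -> exp x <= 1 + x/2.
Proof.
  intros H. pose proof (exp_ineq1_le (-x)).
  assert (exp x = / exp (-x)) by (rewrite exp_Ropp, Rinv_inv; auto).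
  rewrite H1. assert (0 < 1 - x) by lra.
  apply (Rmult_le_reg_r (exp (-x))). apply exp_pos.
  rewrite Rinv_l by (apply Rgt_not_eq, exp_pos).
  apply Rle_trans with ((1 + x/2) * (1 - x)). nra.
  apply Rmult_le_compat_l; lra.
Qed.

Lemma mu_facts lam : 1 < lam -> 0 < mu lam < 1 /\ (mu lam)^2 = 1 - / lam^2.
Proof.
  intros H. assert (1 < lam^2) by nra.
  assert (0 < / lam^2 < 1).
  { split. apply Rinv_0_lt_compat; lra.
    rewrite <- Rinv_1. apply Rinv_lt_contravar; lra. }
  unfold mu. split; [split|].
  - apply sqrt_lt_R0; lra.
  - apply Rlt_le_trans with (sqrt 1); [apply sqrt_lt_1_alt; lra| rewrite sqrt_1; lra].
  - rewrite <- Rsqr_pow2, Rsqr_sqrt; lra.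
Qed.

Lemma mu_mono l0 l : 1 < l0 -> l0 <= l -> mu l0 <= mu l.
Proof.
  intros H1 H2. unfold mu. apply sqrt_le_1_alt.
  assert (/ l^2 <= / l0^2). { apply Rinv_le_contravar; nra. }
  lra.
Qed.

Lemma dF_id lam s : 1 < lam -> -1 < mu lam*(1+s) < 1 ->
  dF (mu lam) (ln lam) s = mu lam * ln (1 - (lam^2-1)*s*(2+s)).
Proof.
  intros H Ha. destruct (mu_facts lam H) as [[H0 H1] H2].
  unfold dF. f_equal.
  replace (2 * ln lam) with (ln (lam^2)) by (rewrite ln_pow by lra; simpl; ring).
  rewrite <- ln_mult by lra. rewrite <- ln_mult by (try apply Rmult_lt_0_compat; nra).
  f_equal. set (m := mu lam) in *.
  assert (lam^2 * m^2 = lam^2 - 1).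
  { rewrite H2. field. lra. }
  transitivity (lam^2 - (lam^2*m^2)*(1+s)^2); [ring|]. rewrite H3. ring.
Qed.

Lemma lnb_pos t : 0 <= t <= 1/2 -> -2*t <= ln (1 - t) <= -t.
Proof.
  intros H. split.
  - pose proof (ln_lower (1-t) ltac:(lra)).
    assert (/ (1-t) <= 1 + 2*t).
    { apply (Rmult_le_reg_r (1-t)); [lra|]. rewrite Rinv_l by lra. nra. }
    lra.
  - pose proof (ln_upper (1-t) ltac:(lra)). lra.
Qed.

Lemma lnb_neg t : -1/2 <= t <= 0 -> -2/3*t <= ln (1 - t) <= -t.
Proof.
  intros H. split.
  - pose proof (ln_lower (1-t) ltac:(lra)).
    assert (/ (1-t) <= 1 + 2/3*t).
    { apply (Rmult_le_reg_r (1-t)); [lra|]. rewrite Rinv_l by lra. nra. }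
    lra.
  - pose proof (ln_upper (1-t) ltac:(lra)). lra.
Qed.

Lemma dbound_pos lam s : 1 < lam -> 0 <= s -> s * lam^2 <= 1/8 ->
  -1 < mu lam*(1+s) < 1 ->
  -5 * (mu lam * (lam^2-1)) * s <= dF (mu lam) (ln lam) s <= -2 * (mu lam * (lam^2-1)) * s.
Proof.
  intros H Hs Hb Ha. rewrite dF_id by auto.
  destruct (mu_facts lam H) as [[H0 H1] H2].
  set (m := mu lam) in *. set (K := lam^2-1).
  assert (HK : 0 < K) by (unfold K; nra).
  assert (Ks : K * s <= 1/8) by (unfold K; nra).
  assert (0 <= K*s) by nra.
  assert (s <= 1/8). { assert (1 <= lam^2) by nra. nra. }
  set (t := K*s*(2+s)).
  assert (Ht : 0 <= t <= 1/2) by (unfold t; split; nra).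
  destruct (lnb_pos t Ht).
  assert (2*(K*s) <= t <= (17/8)*(K*s)) by (unfold t; split; nra).
  split; nra.
Qed.

Lemma dbound_neg lam s : 1 < lam -> s <= 0 -> -s * lam^2 <= 1/8 ->
  -1 < mu lam*(1+s) < 1 ->
  1/2 * (mu lam * (lam^2-1)) * (-s) <= dF (mu lam) (ln lam) s <= 2 * (mu lam * (lam^2-1)) * (-s).
Proof.
  intros H Hs Hb Ha. rewrite dF_id by auto.
  destruct (mu_facts lam H) as [[H0 H1] H2].
  set (m := mu lam) in *. set (K := lam^2-1).
  assert (HK : 0 < K) by (unfold K; nra).
  assert (Ks : K * (-s) <= 1/8) by (unfold K; nra).
  assert (0 <= K*(-s)) by nra.
  assert (-s <= 1/8). { assert (1 <= lam^2) by nra. nra. }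
  set (t := K*s*(2+s)).
  assert (Ht : -1/2 <= t <= 0) by (unfold t; split; nra).
  destruct (lnb_neg t Ht).
  assert ((15/8)*(K*(-s)) <= -t <= 2*(K*(-s))) by (unfold t; split; nra).
  split; nra.
Qed.

Lemma mvt_ge f f' x y : x <= y ->
  (forall c, x <= c <= y -> derivable_pt_lim f c (f' c)) ->
  (forall c, x < c < y -> f' c <= 0) -> f y <= f x.
Proof.
  intros Hxy Hd Hp. destruct (Req_dec x y) as [->|Hne]; [lra|].
  destruct (MVT_cor2 f f' x y) as [c [Hc1 Hc2]]; [lra|auto|].
  specialize (Hp c Hc2). nra.
Qed.

Lemma Fd0 m L : Fd m L 0 = 0.
Proof. unfold Fd. rewrite Rplus_0_r, Rmult_1_r. ring. Qed.

Lemma dom_a lam c : 1 < lam -> -1 < c < / mu lam - 1 -> -1 < mu lam*(1+c) < 1.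
Proof.
  intros H Hc. destruct (mu_facts lam H) as [[H0 H1] H2].
  split. nra.
  assert (1 + c < / mu lam) by lra.
  apply Rmult_lt_compat_l with (r := mu lam) in H3; auto.
  rewrite Rinv_r in H3; lra.
Qed.

Lemma dom_pos lam : 1 < lam -> 0 < / mu lam - 1.
Proof.
  intros H. destruct (mu_facts lam H) as [[H0 H1] H2].
  assert (1 < / mu lam). { rewrite <- Rinv_1. apply Rinv_lt_contravar; lra. }
  lra.
Qed.

Lemma Fbound lam e : 1 < lam -> in_dom lam e -> Rabs e * lam^2 <= 1/8 ->
  -5/2 * (mu lam * (lam^2-1)) * e^2 <= Fd (mu lam) (ln lam) e <=
  -1/4 * (mu lam * (lam^2-1)) * e^2.
Proof.
  intros H [He1 He2] Hb.
  destruct (mu_facts lam H) as [[H0 H1] H2].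
  assert (HP : 0 < mu lam * (lam^2-1)) by (apply Rmult_lt_0_compat; nra).
  pose proof (dom_pos lam H).
  set (P := mu lam * (lam^2-1)) in *.
  destruct (Rle_or_lt 0 e) as [Hp|Hn].
  - rewrite Rabs_right in Hb by lra.
    assert (Hd : forall C c, 0 <= c <= e -> derivable_pt_lim (fun s => Fd (mu lam) (ln lam) s + C * s^2) c (dF (mu lam) (ln lam) c + 2*C*c))
      by (intros; apply h_deriv, dom_a; auto; lra).
    assert (Hdb : forall c, 0 < c < e -> -5 * P * c <= dF (mu lam) (ln lam) c <= -2 * P * c)
      by (intros; apply dbound_pos; auto; try lra; try nra; apply dom_a; auto; lra).
    split.
    + pose proof (mvt_le _ _ 0 e Hp (Hd (5/2*P))) as Hm.
      cbv beta in Hm. rewrite Fd0 in Hm.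
      assert (0 + 5/2*P*0^2 <= Fd (mu lam) (ln lam) e + 5/2*P*e^2).
      { apply Hm. intros c Hc. destruct (Hdb c Hc). nra. }
      lra.
    + pose proof (mvt_ge _ _ 0 e Hp (Hd P)) as Hm.
      cbv beta in Hm. rewrite Fd0 in Hm.
      assert (Fd (mu lam) (ln lam) e + P*e^2 <= 0 + P*0^2).
      { apply Hm. intros c Hc. destruct (Hdb c Hc). nra. }
      nra.
  - rewrite Rabs_left in Hb by lra.
    assert (Hd : forall C c, e <= c <= 0 -> derivable_pt_lim (fun s => Fd (mu lam) (ln lam) s + C * s^2) c (dF (mu lam) (ln lam) c + 2*C*c))
      by (intros; apply h_deriv, dom_a; auto; lra).
    assert (Hdb : forall c, e < c < 0 -> 1/2 * P * (-c) <= dF (mu lam) (ln lam) c <= 2 * P * (-c))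
      by (intros; apply dbound_neg; auto; try lra; try nra; apply dom_a; auto; lra).
    split.
    + pose proof (mvt_ge _ _ e 0 ltac:(lra) (Hd P)) as Hm.
      cbv beta in Hm. rewrite Fd0 in Hm.
      assert (0 + P*0^2 <= Fd (mu lam) (ln lam) e + P*e^2).
      { apply Hm. intros c Hc. destruct (Hdb c Hc). nra. }
      nra.
    + pose proof (mvt_le _ _ e 0 ltac:(lra) (Hd (1/4*P))) as Hm.
      cbv beta in Hm. rewrite Fd0 in Hm.
      assert (Fd (mu lam) (ln lam) e + 1/4*P*e^2 <= 0 + 1/4*P*0^2).
      { apply Hm. intros c Hc. destruct (Hdb c Hc). nra. }
      lra.
Qed.

Lemma mvt_gt f f' x y : x < y ->
  (forall c, x <= c <= y -> derivable_pt_lim f c (f' c)) ->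
  (forall c, x < c < y -> f' c < 0) -> f y < f x.
Proof.
  intros Hxy Hd Hp.
  destruct (MVT_cor2 f f' x y) as [c [Hc1 Hc2]]; [lra|auto|].
  specialize (Hp c Hc2). nra.
Qed.

Lemma arg_pos lam c : 1 < lam -> -1 < mu lam*(1+c) < 1 -> 0 < 1 - (lam^2-1)*c*(2+c).
Proof.
  intros H Ha. destruct (mu_facts lam H) as [[H0 H1] H2].
  set (m := mu lam) in *.
  assert (lam^2 * m^2 = lam^2 - 1) by (rewrite H2; field; lra).
  replace (1 - (lam^2-1)*c*(2+c)) with (lam^2 * ((1 + m*(1+c))*(1 - m*(1+c)))).
  2:{ transitivity (lam^2 - (lam^2*m^2)*(1+c)^2); [ring|]. rewrite H3. ring. }
  apply Rmult_lt_0_compat; nra.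
Qed.

Lemma mono_neg lam e1 e2 : 1 < lam -> -1 < e1 -> e1 < e2 -> e2 < 0 ->
  gamma lam e1 < gamma lam e2.
Proof.
  intros H H1 H2 H3. rewrite !gamma_exp by lra. apply exp_increasing.
  pose proof (dom_pos lam H). destruct (mu_facts lam H) as [[M0 M4] M5].
  apply (mvt_lt _ (dF (mu lam) (ln lam))); auto.
  - intros; apply Fd_deriv, dom_a; auto; lra.
  - intros c Hc. rewrite dF_id by (auto; apply dom_a; auto; lra).
    apply Rmult_lt_0_compat; auto. rewrite <- ln_1. apply ln_increasing. lra.
    assert (0 < lam^2-1) by nra. assert (c*(2+c) < 0) by nra. nra.
Qed.

Lemma mono_pos lam e1 e2 : 1 < lam -> 0 < e1 -> e1 < e2 -> e2 < / mu lam - 1 ->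
  gamma lam e2 < gamma lam e1.
Proof.
  intros H H1 H2 H3. rewrite !gamma_exp by lra. apply exp_increasing.
  pose proof (dom_pos lam H). destruct (mu_facts lam H) as [[M0 M4] M5].
  apply (mvt_gt _ (dF (mu lam) (ln lam))); auto.
  - intros; apply Fd_deriv, dom_a; auto; lra.
  - intros c Hc. assert (Ha : -1 < mu lam * (1+c) < 1) by (apply dom_a; auto; lra).
    rewrite dF_id by auto.
    pose proof (arg_pos lam c H Ha).
    assert (ln (1 - (lam^2-1)*c*(2+c)) < 0).
    { rewrite <- ln_1. apply ln_increasing. lra.
      assert (0 < lam^2-1) by nra. assert (0 < c*(2+c)) by nra. nra. }
    nra.
Qed.

Lemma gamma_i lam0 lam e : 1 < lam0 -> lam0 <= lam -> in_dom lam e -> Rabs e * lam^2 <= 1/8 ->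
  1 - 3 * lam^2 * e^2 <= gamma lam e /\
  gamma lam e <= 1 - (mu lam0)^3/8 * lam^2 * e^2.
Proof.
  intros H0 H Hd Hb. assert (Hl : 1 < lam) by lra.
  destruct (Fbound lam e Hl Hd Hb) as [F1 F2].
  destruct (mu_facts lam Hl) as [[m1 m2] m3].
  destruct (mu_facts lam0 H0) as [[n1 n2] n3].
  pose proof (mu_mono lam0 lam H0 H).
  rewrite gamma_exp by lra.
  set (m := mu lam) in *. set (m0 := mu lam0) in *.
  assert (HK : lam^2 - 1 = m^2 * lam^2) by (rewrite m3; field; lra).
  rewrite HK in F1, F2.
  assert (Hm3 : m0^3 <= m^3) by (apply pow_incr; lra).
  assert (Hm3' : m^3 <= 1) by (simpl; nra).
  assert (E1 : forall k, k * (m * (m ^ 2 * lam ^ 2)) * e ^ 2 = k * (m^3 * (lam^2 * e^2))) by (intros; ring).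
  rewrite !E1 in F1, F2.
  set (x := lam^2 * e^2) in *.
  assert (Hx0 : 0 <= x) by (unfold x; nra).
  assert (Hx : x <= 1/64).
  { assert (1 <= lam^2) by nra.
    assert (Rabs e * lam^2 >= 0) by (pose proof (Rabs_pos e); nra).
    assert ((Rabs e * lam^2)^2 <= 1/64) by nra.
    assert ((Rabs e * lam^2)^2 = x * lam^2).
    { assert (Hab : Rabs e * Rabs e = e*e) by (rewrite <- Rabs_mult; apply Rabs_right; nra).
      replace ((Rabs e * lam^2)^2) with ((Rabs e * Rabs e) * lam^4) by ring.
      rewrite Hab. unfold x; ring. }
    nra. }
  assert (0 <= m^3) by (simpl; nra).
  replace (1 - 3*lam^2*e^2) with (1 - 3*x) by (unfold x; ring).
  replace (1 - m0^3/8*lam^2*e^2) with (1 - m0^3/8*x) by (unfold x; ring).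
  split.
  - pose proof (exp_ineq1_le (Fd m (ln lam) e)). nra.
  - pose proof (exp_upper (Fd m (ln lam) e) ltac:(split; nra)). nra.
Qed.

Theorem lemmaA3 (lam0 : R) (Hlam0 : 1 < lam0) :
  exists c0 c1 c2 : R, 0 < c0 /\ 0 < c1 /\ 0 < c2 /\
  forall lam : R, lam0 <= lam ->
    (* (i) *)
    (forall eps : R, in_dom lam eps -> Rabs eps * lam ^ 2 <= c0 ->
       1 - c1 * lam ^ 2 * eps ^ 2 <= gamma lam eps /\
       gamma lam eps <= 1 - c2 * lam ^ 2 * eps ^ 2) /\
    (* (ii) *)
    (forall e1 e2 : R, -1 < e1 -> e1 < e2 -> e2 < 0 ->
       gamma lam e1 < gamma lam e2) /\
    (forall e1 e2 : R, 0 < e1 -> e1 < e2 -> e2 < / mu lam - 1 ->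
       gamma lam e2 < gamma lam e1) /\
    (* (iii) *)
    (forall eps : R, in_dom lam eps -> c0 * / lam ^ 2 <= Rabs eps ->
       0 < gamma lam eps /\ gamma lam eps <= 1 - c2 / c0 * / lam ^ 2).
Proof.
  destruct (mu_facts lam0 Hlam0) as [[n1 n2] n3].
  set (m0 := mu lam0) in *.
  assert (Hm3 : 0 < m0^3) by (apply pow_lt; lra).
  exists (1/8), 3, (m0^3/4096).
  split; [lra|split; [lra|split; [lra|]]].
  intros lam Hl. assert (H1 : 1 < lam) by lra.
  assert (Hl2 : 1 < lam^2) by nra.
  split; [|split; [|split]].
  - intros eps Hd Hb. destruct (gamma_i lam0 lam eps Hlam0 Hl Hd Hb) as [G1 G2].
    split; [lra|].
    assert (0 <= lam^2 * eps^2) by nra.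
    fold m0 in G2.
    replace (1 - m0^3/8*lam^2*eps^2) with (1 - m0^3/8*(lam^2*eps^2)) in G2 by ring.
    replace (1 - m0^3/4096*lam^2*eps^2) with (1 - m0^3/4096*(lam^2*eps^2)) by ring.
    nra.
  - intros; apply mono_neg; auto.
  - intros; apply mono_pos; auto.
  - intros eps [Hd1 Hd2] Hb. split.
    { rewrite gamma_exp by lra. apply exp_pos. }
    set (e0 := 1/8 * / lam^2) in *.
    assert (He0 : 0 < e0) by (unfold e0; apply Rmult_lt_0_compat; [lra|apply Rinv_0_lt_compat; lra]).
    assert (He0l : e0 * lam^2 = 1/8) by (unfold e0; field; lra).
    assert (He0b : e0 < 1) by nra.
    pose proof (dom_pos lam H1).
    assert (Hgoal : forall e, Rabs e = e0 -> in_dom lam e -> gamma lam e <= 1 - m0 ^ 3 / 4096 / (1 / 8) * / lam ^ 2).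
    { intros e Ha Hde. destruct (gamma_i lam0 lam e Hlam0 Hl Hde ltac:(rewrite Ha; lra)) as [_ G].
      fold m0 in G. eapply Rle_trans; [exact G|].
      assert (E : lam^2 * e^2 = 1/64 * / lam^2).
      { assert (e^2 = e0^2).
        { rewrite <- Ha. simpl. rewrite !Rmult_1_r, <- Rabs_mult, Rabs_right; nra. }
        rewrite H0. unfold e0. field. lra. }
      replace (1 - m0^3/8*lam^2*e^2) with (1 - m0^3/8*(lam^2*e^2)) by ring.
      rewrite E. right. field. lra. }
    destruct (Rle_or_lt 0 eps) as [Hp|Hn].
    + rewrite Rabs_right in Hb by lra.
      destruct (Req_dec eps e0) as [->|Hne].
      * apply Hgoal; [apply Rabs_right; lra|split; lra].
      * apply Rlt_le, Rlt_le_trans with (gamma lam e0).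
        apply mono_pos; auto; lra.
        apply Hgoal; [apply Rabs_right; lra|split; lra].
    + rewrite Rabs_left in Hb by lra.
      destruct (Req_dec eps (-e0)) as [->|Hne].
      * apply Hgoal; [rewrite Rabs_left; lra|split; lra].
      * apply Rlt_le, Rlt_le_trans with (gamma lam (-e0)).
        apply mono_neg; auto; lra.
        apply Hgoal; [rewrite Rabs_left; lra|split; lra].
Qed.
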